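(* Let $\mathbf{A}$ be a stably free ideal domain (resp. a semistably free ideal domain) and let $S\subseteq\mathbf{A}$ be a two-sided denominator set with $0\notin S$. Then the localization $S^{-1}\mathbf{A}$ is a stably free ideal domain (resp. a semistably free ideal domain).
   Context: A module $P$ over a ring $\mathbf{A}$ is stably free if there exist integers $q,r\ge 0$ with $P\oplus \mathbf{A}^{q}\cong \mathbf{A}^{q+r}$. A stably free ideal domain is a (left and right) Noetherian domain in which every left ideal and every right ideal is stably free. A semistably free ideal domain is a (left and right) Ore domain in which every finitely generated left ideal and every finitely generated right ideal is stably free. A two-sided denominator set is a multiplicatively closed subset $S$ (containing $1$) satisfying the left and right Ore conditions and left and right reversibility, so that the classical localization $S^{-1}\mathbf{A}=\mathbf{A}S^{-1}$ exists. *)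

(* Defs.v *)
From HB Require Import structures.
From mathcomp Require Import all_boot all_order all_algebra.
Set Implicit Arguments. Unset Strict Implicit. Unset Printing Implicit Defensive.
Import GRing.Theory.
Local Open Scope ring_scope.

(* Scalar actions of a ring on itself: left multiplication (left modules /
   left ideals) and right multiplication (right modules / right ideals). *)
Definition lmul (A : nzRingType) (a x : A) : A := a * x.
Definition rmul (A : nzRingType) (a x : A) : A := x * a.

Definition is_ideal (A : nzRingType) (act : A -> A -> A) (I : A -> Prop) : Prop :=
  I 0 /\ (forall x y, I x -> I y -> I (x + y)) /\ (forall a x, I x -> I (act a x)).

Definition fin_gen (A : nzRingType) (act : A -> A -> A) (I : A -> Prop) : Prop :=
  exists (n : nat) (g : 'I_n -> A),
    forall x, I x <-> exists c : 'I_n -> A, x = \sum_(i < n) act (c i) (g i).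

(* Stably free: I (+) A^q ~= A^(q+r) as modules for the action [act]
   (A^n = row vectors 'rV_n with entrywise action). *)
Definition stably_free (A : nzRingType) (act : A -> A -> A) (I : A -> Prop) : Prop :=
  exists (q r : nat) (f : A -> 'rV[A]_q -> 'rV[A]_(q + r)),
    (forall x v y w, I x -> I y -> f (x + y) (v + w) = f x v + f y w) /\
    (forall a x v, I x -> f (act a x) (map_mx (act a) v) = map_mx (act a) (f x v)) /\
    (forall x v y w, I x -> I y -> f x v = f y w -> x = y /\ v = w) /\
    (forall u, exists x v, I x /\ f x v = u).

Definition is_domain (A : nzRingType) : Prop :=
  forall a b : A, a * b = 0 -> a = 0 \/ b = 0.

Definition noetherian (A : nzRingType) (act : A -> A -> A) : Prop :=
  forall I : nat -> A -> Prop,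
    (forall n, is_ideal act (I n)) ->
    (forall n x, I n x -> I n.+1 x) ->
    exists N, forall n x, (N <= n)%N -> (I n x <-> I N x).

Definition left_ore (A : nzRingType) : Prop :=
  forall a s : A, s != 0 -> exists b t : A, t != 0 /\ t * a = b * s.
Definition right_ore (A : nzRingType) : Prop :=
  forall a s : A, s != 0 -> exists b t : A, t != 0 /\ a * t = s * b.

Definition stably_free_ideal_domain (A : nzRingType) : Prop :=
  is_domain A /\ noetherian (@lmul A) /\ noetherian (@rmul A) /\
  (forall I, is_ideal (@lmul A) I -> stably_free (@lmul A) I) /\
  (forall I, is_ideal (@rmul A) I -> stably_free (@rmul A) I).

Definition semistably_free_ideal_domain (A : nzRingType) : Prop :=
  is_domain A /\ left_ore A /\ right_ore A /\
  (forall I, is_ideal (@lmul A) I -> fin_gen (@lmul A) I -> stably_free (@lmul A) I) /\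
  (forall I, is_ideal (@rmul A) I -> fin_gen (@rmul A) I -> stably_free (@rmul A) I).

Definition two_sided_denominator_set (A : nzRingType) (S : A -> Prop) : Prop :=
  S 1 /\ (forall s t, S s -> S t -> S (s * t)) /\
  (forall a s, S s -> exists b t, S t /\ a * t = s * b) /\
  (forall a s, S s -> exists b t, S t /\ t * a = b * s) /\
  (forall a s, S s -> s * a = 0 -> exists t, S t /\ a * t = 0) /\
  (forall a s, S s -> a * s = 0 -> exists t, S t /\ t * a = 0).

(* phi : A -> B is the classical (two-sided) localization S^{-1}A = AS^{-1}:
   it is both a right and a left ring of fractions of A with respect to S. *)
Definition is_localization (A B : nzRingType) (S : A -> Prop) (phi : A -> B) : Prop :=
  (forall s, S s -> exists u : B, u * phi s = 1 /\ phi s * u = 1) /\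
  (forall b : B, exists a s, S s /\ b * phi s = phi a) /\
  (forall b : B, exists a s, S s /\ phi s * b = phi a) /\
  (forall a, phi a = 0 <-> exists s, S s /\ a * s = 0) /\
  (forall a, phi a = 0 <-> exists s, S s /\ s * a = 0).

(* Main.v *)
Require Import Defs.
From HB Require Import structures.
From mathcomp Require Import all_boot all_order all_algebra.
From Stdlib Require Import ClassicalEpsilon Classical.
Set Implicit Arguments. Unset Strict Implicit. Unset Printing Implicit Defensive.
Import GRing.Theory.
Local Open Scope ring_scope.

Lemma lmulZ (R : nzRingType) m n a (v : 'M[R]_(m, n)) : map_mx (@lmul R a) v = a *: v.
Proof. by apply/matrixP => i j; rewrite !mxE. Qed.

Section Left.
Variables (A B : nzRingType) (S : A -> Prop) (phi : A -> B).
Hypothesis phiD : forall x y, phi (x + y) = phi x + phi y.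
Hypothesis phiM : forall x y, phi (x * y) = phi x * phi y.
Hypothesis phi1 : phi 1 = 1.
Hypothesis Hinv : forall s, S s -> exists u, u * phi s = 1 /\ phi s * u = 1.
Hypothesis HL : forall b, exists a s, S s /\ phi s * b = phi a.
Hypothesis HR : forall b, exists a s, S s /\ b * phi s = phi a.
Hypothesis Hinj0 : forall a, phi a = 0 -> a = 0.
Hypothesis HS1 : S 1.
Hypothesis HSM : forall s t, S s -> S t -> S (s * t).
Hypothesis HOre : forall a s, S s -> exists b t, S t /\ t * a = b * s.
Hypothesis h0 : ~ S 0.
Hypothesis Adom : is_domain A.

Lemma phi0 : phi 0 = 0.
Proof. by apply: (addrI (phi 0)); rewrite -phiD !addr0. Qed.

Lemma phiN x : phi (- x) = - phi x.
Proof. by apply: (addIr (phi x)); rewrite -phiD !addNr phi0. Qed.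

Lemma phi_inj x y : phi x = phi y -> x = y.
Proof.
move=> e; apply/eqP; rewrite -subr_eq0; apply/eqP; apply: Hinj0.
by rewrite phiD phiN e subrr.
Qed.

Lemma phi_sum n (c : 'I_n -> A) : phi (\sum_(i < n) c i) = \sum_(i < n) phi (c i).
Proof. exact: (big_morph phi phiD phi0). Qed.

Lemma inv_ex s : exists u, S s -> u * phi s = 1 /\ phi s * u = 1.
Proof.
case: (classic (S s)) => hs; last by exists 0.
by have [u hu] := Hinv hs; exists u.
Qed.

Definition inv s := proj1_sig (constructive_indefinite_description _ (inv_ex s)).

Lemma invL s : S s -> inv s * phi s = 1.
Proof. move=> hs; rewrite /inv; case: constructive_indefinite_description => u hu /=. by case: (hu hs). Qed.
Lemma invR s : S s -> phi s * inv s = 1.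
Proof. move=> hs; rewrite /inv; case: constructive_indefinite_description => u hu /=. by case: (hu hs). Qed.

Lemma frac_inv s a x : S s -> phi s * x = phi a -> x = inv s * phi a.
Proof. by move=> hs <-; rewrite mulrA invL // mul1r. Qed.

Lemma cancelL s y : S s -> phi s * y = 0 -> y = 0.
Proof. move=> hs e. by rewrite -[y]mul1r -(invL hs) -mulrA e mulr0. Qed.
Lemma cancelR s y : S s -> y * phi s = 0 -> y = 0.
Proof. move=> hs e. by rewrite -[y]mulr1 -(invR hs) mulrA e mul0r. Qed.

Lemma common s1 s2 : S s1 -> S s2 -> exists c1 c2, S (c1 * s1) /\ c1 * s1 = c2 * s2.
Proof.
move=> h1 h2; have [b [t [ht e]]] := HOre s1 h2.
by exists t, b; split => //; apply: HSM.
Qed.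

Lemma scale s x a c : phi s * x = phi a -> phi (c * s) * x = phi (c * a).
Proof. by move=> e; rewrite !phiM -mulrA e. Qed.

Lemma inv_scale c s : S s -> S (c * s) -> inv (c * s) * phi c = inv s.
Proof.
move=> hs hcs.
by rewrite -[LHS]mulr1 -(invR hs) mulrA -(mulrA _ (phi c)) -phiM invL // mul1r.
Qed.

Lemma seq_denom (l : seq B) : exists s, S s /\ forall b, b \in l -> exists a, phi s * b = phi a.
Proof.
elim: l => [|b l [s1 [h1 IH]]]; first by exists 1; split => // b.
have [a0 [s0 [h0' e0]]] := HL b.
have [c0 [c1 [hc e]]] := common h0' h1.
exists (c0 * s0); split => // b'; rewrite inE => /orP [/eqP -> | hb'].
  by exists (c0 * a0); apply: scale.
have [a ha] := IH _ hb'; exists (c1 * a); rewrite e; exact: scale.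
Qed.

Lemma fam_denom n (g : 'I_n -> B) : exists s (e : 'I_n -> A), S s /\ forall i, phi s * g i = phi (e i).
Proof.
have [s [hs H]] := seq_denom [seq g i | i <- enum 'I_n].
have : forall i, exists a, phi s * g i = phi a.
  by move=> i; apply: H; apply: map_f; rewrite mem_enum.
by move=> /fin_all_exists [e he]; exists s, e.
Qed.

Lemma row_denom n (u : 'rV[B]_n) : exists s m, S s /\ phi s *: u = map_mx phi m.
Proof.
have [s [e [hs he]]] := fam_denom (fun j => u 0 j).
exists s, (\row_j e j); split => //; apply/matrixP => i j.
by rewrite (ord1 i) !mxE he.
Qed.

Lemma PhiD m n (v w : 'M[A]_(m, n)) : map_mx phi (v + w) = map_mx phi v + map_mx phi w.
Proof. by apply/matrixP => i j; rewrite !mxE phiD. Qed.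
Lemma PhiZ m n a (v : 'M[A]_(m, n)) : map_mx phi (a *: v) = phi a *: map_mx phi v.
Proof. by apply/matrixP => i j; rewrite !mxE phiM. Qed.
Lemma Phi_inj m n (v w : 'M[A]_(m, n)) : map_mx phi v = map_mx phi w -> v = w.
Proof. move=> e; apply/matrixP => i j; apply: phi_inj. by move/matrixP: e => /(_ i j); rewrite !mxE. Qed.


Lemma frac_invZ m n s (v M : 'M[B]_(m, n)) : S s -> phi s *: v = M -> v = inv s *: M.
Proof. by move=> hs <-; rewrite scalerA invL // scale1r. Qed.

Lemma sf_transfer (I : A -> Prop) (J : B -> Prop) :
  is_ideal (@lmul A) I -> is_ideal (@lmul B) J ->
  (forall a, I a -> J (phi a)) ->
  (forall x, J x -> exists s a, S s /\ I a /\ phi s * x = phi a) ->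
  stably_free (@lmul A) I -> stably_free (@lmul B) J.
Proof.
move=> [I0 [ID IM]] [J0 [JD JM]] IJ JI [q [r [f [fadd [flin [finj fsurj]]]]]].
have flinZ : forall a x v, I x -> f (a * x) (a *: v) = a *: f x v.
  by move=> a x v hx; rewrite -!lmulZ; exact: flin.
pose Rep x v s a (w : 'rV[A]_q) := S s /\ phi s * x = phi a /\ phi s *: v = map_mx phi w.
have rep_scale : forall x v s a w c, Rep x v s a w -> S (c * s) -> Rep x v (c * s) (c * a) (c *: w).
  move=> x v s a w c [hs [e1 e2]] hcs; split => //; split; first exact: scale.
  by rewrite phiM -scalerA e2 PhiZ.
have rep_ex : forall x (v : 'rV[B]_q), exists p : A * (A * 'rV[A]_q),
    Rep x v p.1 p.2.1 p.2.2 /\ (J x -> I p.2.1).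
  move=> x v.
  have [s1 [m1 [hs1 e1]]] := row_denom v.
  have [s0 [a0 [hs0 [e0 Ia0]]]] : exists s0 a0, S s0 /\ phi s0 * x = phi a0 /\ (J x -> I a0).
    case: (classic (J x)) => hx.
      by have [s [a [hs [Ia e]]]] := JI x hx; exists s, a.
    by have [a [s [hs e]]] := HL x; exists s, a.
  have [c0 [c1 [hc e]]] := common hs0 hs1.
  exists (c0 * s0, (c0 * a0, c1 *: m1)); split => /=; last first.
    by move=> hx; apply: IM; apply: Ia0.
  split => //; split; first exact: scale.
  by rewrite e phiM -scalerA e1 PhiZ.
pose rep x v := proj1_sig (constructive_indefinite_description _ (rep_ex x v)).
have repP : forall x v, Rep x v (rep x v).1 (rep x v).2.1 (rep x v).2.2 /\ (J x -> I (rep x v).2.1).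
  by move=> x v; rewrite /rep; case: constructive_indefinite_description.
pose f' x v := inv (rep x v).1 *: map_mx phi (f (rep x v).2.1 (rep x v).2.2).
have rep_uniq : forall x v s a w a' w', Rep x v s a w -> Rep x v s a' w' -> a = a' /\ w = w'.
  move=> x v s a w a' w' [_ [e1 e2]] [_ [e1' e2']]; split.
    by apply: phi_inj; rewrite -e1 -e1'.
  by apply: Phi_inj; rewrite -e2 -e2'.
have val_scale : forall s a w c, I a -> S s -> S (c * s) ->
    inv s *: map_mx phi (f a w) = inv (c * s) *: map_mx phi (f (c * a) (c *: w)).
  by move=> s a w c Ia hs hcs; rewrite flinZ // PhiZ scalerA inv_scale.
have WD : forall x v s a w, J x -> Rep x v s a w -> I a -> f' x v = inv s *: map_mx phi (f a w).
  move=> x v s a w hx hr Ia.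
  case: (repP x v) => hr' /(_ hx) Ia'.
  rewrite /f'; move: hr' Ia'; case: (rep x v) => s' [a' w'] /= hr' Ia'; rewrite /=.
  have [c [c' [hcs e]]] := common hr.1 hr'.1.
  have r1 := rep_scale _ _ _ _ _ _ hr hcs.
  have hcs' : S (c' * s') by rewrite -e.
  have r2 := rep_scale _ _ _ _ _ _ hr' hcs'.
  rewrite -e in r2.
  have [ea ew] := rep_uniq _ _ _ _ _ _ _ r1 r2.
  rewrite (val_scale s a w c) //; last exact: hr.1.
  have := val_scale s' a' w' c' Ia' hr'.1 hcs'.
  by rewrite -e -ea -ew => ->.
exists q, r, f'; split; [|split; [|split]].
- move=> x v y w hx hy.
  have [[s1 [a1 w1]] [r1 I1]] := rep_ex x v.
  have [[s2 [a2 w2]] [r2 I2]] := rep_ex y w.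
  move: (I1 hx) (I2 hy) => {}I1 {}I2 /=.
  have [c1 [c2 [hc e]]] := common r1.1 r2.1.
  have R1 := rep_scale _ _ _ _ _ _ r1 hc.
  have hc' : S (c2 * s2) by rewrite -e.
  have R2 := rep_scale _ _ _ _ _ _ r2 hc'.
  rewrite -e in R2.
  have Rs : Rep (x + y) (v + w) (c1 * s1) (c1 * a1 + c2 * a2) (c1 *: w1 + c2 *: w2).
    case: R1 => [_ [e1 e2]]; case: R2 => [_ [e1' e2']].
    split => //; split; first by rewrite mulrDr e1 e1' phiD.
    by rewrite scalerDr e2 e2' PhiD.
  have Is : I (c1 * a1 + c2 * a2) by apply: ID; apply: IM.
  rewrite (WD _ _ _ _ _ (JD _ _ hx hy) Rs Is) (WD _ _ _ _ _ hx R1 (IM _ _ I1)).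
  rewrite (WD _ _ _ _ _ hy R2 (IM _ _ I2)) fadd; try by apply: IM.
  by rewrite PhiD scalerDr.
- move=> b x v hx; rewrite lmulZ lmulZ /lmul.
  have [[s [a w]] [[hs [e1 e2]] Ia]] := rep_ex x v.
  move: (Ia hx) => {}Ia /=.
  have [e [t [ht et]]] := HL (b * inv s).
  have Rb : Rep (b * x) (b *: v) t (e * a) (e *: w).
    split => //; split.
      have E : phi t * (b * x) = phi t * (b * inv s) * (phi s * x).
        by rewrite -!mulrA (mulrA (inv s)) invL // mul1r.
      by rewrite E et e1 phiM.
    have E : phi t *: (b *: v) = (phi t * (b * inv s)) *: (phi s *: v).
      by rewrite !scalerA -!mulrA invL // mulr1.
    by rewrite E et e2 PhiZ.
  rewrite (WD _ _ _ _ _ (JM b x hx) Rb (IM _ _ Ia)).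
  rewrite (WD _ _ _ _ _ hx (conj hs (conj e1 e2)) Ia) flinZ // PhiZ !scalerA.
  by rewrite -et mulrA invL // mul1r.
- move=> x v y w hx hy E.
  have [[s1 [a1 w1]] [r1 I1]] := rep_ex x v.
  have [[s2 [a2 w2]] [r2 I2]] := rep_ex y w.
  move: (I1 hx) (I2 hy) => {}I1 {}I2 /=.
  have [c1 [c2 [hc e]]] := common r1.1 r2.1.
  have R1 := rep_scale _ _ _ _ _ _ r1 hc.
  have hc' : S (c2 * s2) by rewrite -e.
  have R2 := rep_scale _ _ _ _ _ _ r2 hc'.
  rewrite -e in R2.
  rewrite (WD _ _ _ _ _ hx R1 (IM _ _ I1)) (WD _ _ _ _ _ hy R2 (IM _ _ I2)) in E.
  have E' : map_mx phi (f (c1 * a1) (c1 *: w1)) = map_mx phi (f (c2 * a2) (c2 *: w2)).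
    by rewrite -[LHS]scale1r -(invR hc) -scalerA E scalerA invR // scale1r.
  have [ea ew] := finj _ _ _ _ (IM _ _ I1) (IM _ _ I2) (Phi_inj E').
  move: ea ew; rewrite /lmul /= => ea ew.
  case: R1 => [_ [f1 f2]]; case: R2 => [_ [f1' f2']].
  split.
    by rewrite (frac_inv hc f1) (frac_inv hc f1') ea.
  by rewrite (frac_invZ hc f2) (frac_invZ hc f2') ew.
- move=> u.
  have [s [m [hs e]]] := row_denom u.
  have [a [w [Ia efm]]] := fsurj m.
  have Rp : Rep (inv s * phi a) (inv s *: map_mx phi w) s a w.
    split => //; split; first by rewrite mulrA invR // mul1r.
    by rewrite scalerA invR // scale1r.
  have Jx : J (inv s * phi a) by apply: JM; apply: IJ.
  exists (inv s * phi a), (inv s *: map_mx phi w); split => //.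
  by rewrite (WD _ _ _ _ _ Jx Rp Ia) efm -e scalerA invL // scale1r.
Qed.


Lemma pre_ideal (J : B -> Prop) : is_ideal (@lmul B) J -> is_ideal (@lmul A) (fun a => J (phi a)).
Proof.
move=> [J0 [JD JM]]; split; first by rewrite phi0.
split; first by move=> x y hx hy; rewrite phiD; apply: JD.
by move=> a x hx; rewrite /lmul phiM; apply: JM.
Qed.

Lemma J_frac (J : B -> Prop) s x a : is_ideal (@lmul B) J -> S s -> phi s * x = phi a ->
  (J x <-> J (phi a)).
Proof.
move=> [J0 [JD JM]] hs e; split => h.
  by rewrite -e; apply: JM.
by rewrite (frac_inv hs e); apply: JM.
Qed.

Lemma B_domain : is_domain B.
Proof.
move=> b1 b2 e.
have [a1 [s1 [hs1 e1]]] := HR b1.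
have [c [t [ht et]]] := HR (inv s1 * b2).
have : phi (a1 * c) = 0.
  by rewrite phiM -e1 -et !mulrA -(mulrA b1) invR // mulr1 e mul0r.
move/Hinj0/Adom => [a10|c0].
  by left; apply: (cancelR hs1); rewrite e1 a10 phi0.
right; have y0 : inv s1 * b2 = 0 by apply: (cancelR ht); rewrite et c0 phi0.
by rewrite -[b2]mul1r -(invR hs1) -mulrA y0 mulr0.
Qed.

Lemma B_noeth : noetherian (@lmul A) -> noetherian (@lmul B).
Proof.
move=> HN J HJ Hmono.
have [N HNn] := HN (fun n a => J n (phi a)) (fun n => pre_ideal (HJ n)) (fun n x => Hmono n (phi x)).
exists N => n x hn.
have [a [s [hs e]]] := HL x.
apply: (iff_trans (J_frac (HJ n) hs e)); apply: (iff_trans (HNn n a hn)).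
apply: iff_sym; exact: J_frac (HJ N) hs e.
Qed.

Lemma B_ore : left_ore A -> left_ore B.
Proof.
move=> HO a s hs0.
have [s' [tau [htau etau]]] := HR s.
have [a' [sig [hsig esig]]] := HL a.
have s'0 : s' != 0.
  apply/eqP => z; move/eqP: hs0; apply; apply: (cancelR htau); by rewrite etau z phi0.
have [b'' [t'' [ht'' e'']]] := HO (a' * tau) s' s'0.
exists (phi b''), (phi t'' * phi sig); split.
  apply/eqP => z; move/eqP: ht''; apply; apply: Hinj0; exact: (cancelR hsig z).
have -> : s = phi s' * inv tau by rewrite -etau -mulrA invR // mulr1.
rewrite -mulrA esig [in RHS]mulrA -[in RHS]phiM -e'' !phiM.
by rewrite -!mulrA invR // mulr1.
Qed.

Lemma B_sf : (forall I, is_ideal (@lmul A) I -> stably_free (@lmul A) I) ->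
  forall J, is_ideal (@lmul B) J -> stably_free (@lmul B) J.
Proof.
move=> H J HJ.
apply: (@sf_transfer (fun a => J (phi a)) J (pre_ideal HJ) HJ) => //.
- move=> x hx; have [a [s [hs e]]] := HL x; exists s, a; split => //; split => //.
  exact: (J_frac HJ hs e).1.
- apply: H; exact: pre_ideal.
Qed.

Lemma B_ssf : (forall I, is_ideal (@lmul A) I -> fin_gen (@lmul A) I -> stably_free (@lmul A) I) ->
  forall J, is_ideal (@lmul B) J -> fin_gen (@lmul B) J -> stably_free (@lmul B) J.
Proof.
move=> H J HJ [n [g Hg]].
have : forall i, exists p : A * A, S p.1 /\ phi p.1 * g i = phi p.2.
  by move=> i; have [a [s [hs e]]] := HL (g i); exists (s, a).
move=> /fin_all_exists [sa hsa].
pose I := fun x => exists c : 'I_n -> A, x = \sum_(i < n) lmul (c i) (sa i).2.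
have HI : is_ideal (@lmul A) I.
  split; first by exists (fun=> 0); rewrite big1 // => i _; rewrite /lmul mul0r.
  split.
    move=> x y [c ->] [d ->]; exists (fun i => c i + d i).
    by rewrite -big_split /=; apply: eq_bigr => i _; rewrite /lmul mulrDl.
  move=> b x [c ->]; exists (fun i => b * c i).
  by rewrite /lmul mulr_sumr; apply: eq_bigr => i _; rewrite mulrA.
apply: (@sf_transfer I J HI HJ).
- move=> x [c ->]; apply/(Hg _).2; exists (fun i => phi (c i) * phi (sa i).1).
  rewrite phi_sum; apply: eq_bigr => i _; rewrite /lmul phiM -mulrA.
  by case: (hsa i) => _ ->.
- move=> x /(Hg _).1 [c ex].
  have [s [e [hs he]]] := fam_denom (fun i => c i * inv (sa i).1).
  exists s, (\sum_(i < n) lmul (e i) (sa i).2); split => //; split; first by exists e.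
  rewrite ex mulr_sumr phi_sum; apply: eq_bigr => i _; rewrite /lmul phiM -he.
  case: (hsa i) => hsi <-.
  by rewrite -!mulrA (mulrA (inv _)) invL // mul1r.
- apply: H => //; exists n, (fun i => (sa i).2) => x; exact: iff_refl.
Qed.


Lemma left_all : is_domain B /\ (noetherian (@lmul A) -> noetherian (@lmul B)) /\
  (left_ore A -> left_ore B) /\
  ((forall I, is_ideal (@lmul A) I -> stably_free (@lmul A) I) ->
     forall J, is_ideal (@lmul B) J -> stably_free (@lmul B) J) /\
  ((forall I, is_ideal (@lmul A) I -> fin_gen (@lmul A) I -> stably_free (@lmul A) I) ->
     forall J, is_ideal (@lmul B) J -> fin_gen (@lmul B) J -> stably_free (@lmul B) J).
Proof using phiD phiM phi1 Hinv HL HR Hinj0 HS1 HSM HOre h0 Adom.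
split; first exact: B_domain.
split; first exact: B_noeth.
split; first exact: B_ore.
split; [exact: B_sf | exact: B_ssf].
Qed.

End Left.

Theorem mainTheorem10 (A : nzRingType) (S : A -> Prop)
    (hS : two_sided_denominator_set S) (h0 : ~ S 0)
    (B : nzRingType) (phi : {rmorphism A -> B})
    (hloc : is_localization S phi) :
  (stably_free_ideal_domain A -> stably_free_ideal_domain B) /\
  (semistably_free_ideal_domain A -> semistably_free_ideal_domain B).
Proof.
case: hS => [HS1 [HSM [HROre [HLOre [_ _]]]]].
case: hloc => [Hinv [HR [HL [Hk1 _]]]].
have phiD : forall x y, phi (x + y) = phi x + phi y by move=> x y; rewrite rmorphD.
have phiM : forall x y, phi (x * y) = phi x * phi y by move=> x y; rewrite rmorphM.
have phi1 : phi 1 = 1 by rewrite rmorph1.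
have key : is_domain A ->
  (is_domain B /\ (noetherian (@lmul A) -> noetherian (@lmul B)) /\
  (left_ore A -> left_ore B) /\
  ((forall I, is_ideal (@lmul A) I -> stably_free (@lmul A) I) ->
     forall J, is_ideal (@lmul B) J -> stably_free (@lmul B) J) /\
  ((forall I, is_ideal (@lmul A) I -> fin_gen (@lmul A) I -> stably_free (@lmul A) I) ->
     forall J, is_ideal (@lmul B) J -> fin_gen (@lmul B) J -> stably_free (@lmul B) J)) /\
  ((noetherian (@rmul A) -> noetherian (@rmul B)) /\
  (right_ore A -> right_ore B) /\
  ((forall I, is_ideal (@rmul A) I -> stably_free (@rmul A) I) ->
     forall J, is_ideal (@rmul B) J -> stably_free (@rmul B) J) /\
  ((forall I, is_ideal (@rmul A) I -> fin_gen (@rmul A) I -> stably_free (@rmul A) I) ->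
     forall J, is_ideal (@rmul B) J -> fin_gen (@rmul B) J -> stably_free (@rmul B) J)).
  move=> Adom.
  have Hinj0 : forall a, phi a = 0 -> a = 0.
    move=> a /(Hk1 a).1 [s [hs e]]; case: (Adom _ _ e) => // s0.
    by rewrite s0 in hs.
  split.
    exact: (@left_all A B S phi phiD phiM phi1 Hinv HL HR Hinj0 HS1 HSM HLOre h0 Adom).
  have Adomc : is_domain A^c by move=> a b e; case: (Adom b a e); auto.
  have := (@left_all A^c B^c S phi phiD _ phi1 _ HR HL Hinj0 HS1 _ _ h0 Adomc).
  case.
  - move=> x y; exact: phiM y x.
  - move=> s hs; have [u [e1 e2]] := Hinv s hs; by exists u.
  - by move=> s t hs ht; exact: HSM t s ht hs.
  - move=> a s hs; have [b [t [ht e]]] := HROre a s hs; by exists b, t.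
  move=> _ [N [O [SF SSF]]].
  split; first exact: N.
  split.
    move=> HO a s hs; have [b [t [ht e]]] := O HO a s hs; exists b, t; split => //.
  split; [exact: SF | exact: SSF].
split.
- move=> [Adom [NL [NR [SL SR]]]].
  have [[D [N1 [_ [SF1 _]]]] [N2 [_ [SF2 _]]]] := key Adom.
  split => //; split; first exact: N1.
  split; first exact: N2.
  by split; [exact: SF1 | exact: SF2].
- move=> [Adom [OL [OR [SL SR]]]].
  have [[D [_ [O1 [_ SF1]]]] [_ [O2 [_ SF2]]]] := key Adom.
  split => //; split; first exact: O1.
  split; first exact: O2.
  by split; [exact: SF1 | exact: SF2].
Qed.
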